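(* Let $E$ be a finite set, $\mathcal{F}\subseteq 2^E$ a downward-closed family, and $f:\mathbb{R}_{\ge0}^{|E|}\to\mathbb{R}$, $f(\boldsymbol{w})=\max_{S\in\mathcal{F}}\sum_{e\in S}w_e$. Then: (1) $f$ is $1$-Lipschitz: $|f(\boldsymbol{u})-f(\boldsymbol{v})|\le\|\boldsymbol{u}-\boldsymbol{v}\|_1$ for all $\boldsymbol{u},\boldsymbol{v}\in\mathbb{R}_{\ge0}^{|E|}$; (2) $f$ is monotone: if $\boldsymbol{u}\ge\boldsymbol{v}$ coordinate-wise then $f(\boldsymbol{u})\ge f(\boldsymbol{v})$; (3) for every $\tau>0$, the function $f/\tau$ restricted to the domain $[0,\tau]^{|E|}$ is self-bounding.
   Context: A function $g:\mathcal{X}\to\mathbb{R}$ on a product space $\mathcal{X}=\mathcal{X}_1\times\dots\times\mathcal{X}_n$ is self-bounding if there exist functions $g_i:\mathcal{X}^{(i)}\to\mathbb{R}$, $i\in[n]$, where $\mathcal{X}^{(i)}$ is the product of all factors except the $i$-th and $\boldsymbol{x}^{(i)}=(x_1,\dots,x_{i-1},x_{i+1},\dots,x_n)$, such that for all $\boldsymbol{x}\in\mathcal{X}$: $0\le g(\boldsymbol{x})-g_i(\boldsymbol{x}^{(i)})\le1$ for every $i$, and $\sum_{i\in[n]}\big(g(\boldsymbol{x})-g_i(\boldsymbol{x}^{(i)})\big)\le g(\boldsymbol{x})$. A family $\mathcal{F}$ is downward-closed if $S\in\mathcal{F}$ and $T\subseteq S$ imply $T\in\mathcal{F}$. *)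

(* Defs.v *)
From mathcomp Require Import all_boot all_order all_algebra.
Set Implicit Arguments. Unset Strict Implicit. Unset Printing Implicit Defensive.
Import Order.TTheory GRing.Theory Num.Theory.
Local Open Scope ring_scope.

Definition downward_closed (E : finType) (F : {set {set E}}) : Prop :=
  forall S T : {set E}, S \in F -> T \subset S -> T \in F.

(* f(w) = max_{S in F} sum_{e in S} w_e.  The big max uses default 0; when
   set0 \in F and w >= 0 this is exactly the maximum over F. *)
Definition maxweight (R : realFieldType) (E : finType) (F : {set {set E}})
    (w : E -> R) : R :=
  \big[Num.max/0]_(S in F) \sum_(e in S) w e.

(* Self-bounding on the product space X = prod_i X_i, X_i = [x in D i].
   A function g_i on X^(i) is encoded as a function gi i on X whose value
   depends only on the coordinates other than i (for points of X). *)
Definition self_bounding (R : realFieldType) (E : finType) (D : E -> R -> Prop)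
    (g : (E -> R) -> R) : Prop :=
  exists gi : E -> (E -> R) -> R,
    (forall (i : E) (x y : E -> R), (forall j, D j (x j)) -> (forall j, D j (y j)) ->
        (forall j, j != i -> x j = y j) -> gi i x = gi i y) /\
    (forall x : E -> R, (forall j, D j (x j)) ->
        (forall i, 0 <= g x - gi i x <= 1) /\
        \sum_(i : E) (g x - gi i x) <= g x).

(* Main.v *)
Require Import Defs.
From mathcomp Require Import all_boot all_order all_algebra.
Import Order.TTheory GRing.Theory Num.Theory.
Local Open Scope ring_scope.
Set Implicit Arguments. Unset Strict Implicit.

Section H.
Variables (R : realFieldType) (E : finType) (F : {set {set E}}).

Lemma mw_ge0 (w : E -> R) : 0 <= maxweight F w.
Proof. exact: bigmax_ge_id. Qed.

Lemma mw_ge (w : E -> R) S : S \in F -> \sum_(e in S) w e <= maxweight F w.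
Proof. by move=> HS; rewrite /maxweight (bigD1 S) /= ?le_max ?lexx. Qed.

Lemma mw_le (w : E -> R) m : 0 <= m -> (forall S, S \in F -> \sum_(e in S) w e <= m) ->
  maxweight F w <= m.
Proof. by move=> h0 h; apply: bigmax_le. Qed.

Lemma sum_pick (a : E -> R) i : \sum_e (if e == i then a e else 0) = a i.
Proof. by rewrite -big_mkcond big_pred1_eq. Qed.

Lemma sub_sum (g : E -> R) (S : {set E}) : (forall e, 0 <= g e) ->
  \sum_(e in S) g e <= \sum_e g e.
Proof.
move=> h; rewrite big_mkcond /=; apply: ler_sum => e _.
by case: (e \in S).
Qed.

Lemma lip1 (u v : E -> R) : maxweight F u - maxweight F v <= \sum_e `|u e - v e|.
Proof.
rewrite lerBlDl; apply: mw_le.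
  by apply: addr_ge0; [exact: mw_ge0 | apply: sumr_ge0 => e _].
move=> S HS.
have h1 := mw_ge v HS.
have h2 : \sum_(e in S) u e - \sum_(e in S) v e <= \sum_e `|u e - v e|.
  rewrite -sumrB; apply: le_trans (sub_sum _ _) => //.
  by apply: ler_sum => e _; apply: ler_norm.
by rewrite -lerBlDl; apply: le_trans h2; rewrite lerD2l lerN2.
Qed.

Lemma mono (u v : E -> R) : (forall e, v e <= u e) -> maxweight F v <= maxweight F u.
Proof.
move=> h; apply: mw_le; first exact: mw_ge0.
move=> S HS; apply: le_trans (mw_ge u HS).
by apply: ler_sum.
Qed.

End H.

Theorem proposition1 (R : realFieldType) (E : finType) (F : {set {set E}})
    (hF0 : set0 \in F) (hF : downward_closed F) :
  (forall u v : E -> R, (forall e, 0 <= u e) -> (forall e, 0 <= v e) ->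
     `|maxweight F u - maxweight F v| <= \sum_(e : E) `|u e - v e|) /\
  (forall u v : E -> R, (forall e, 0 <= v e) -> (forall e, v e <= u e) ->
     maxweight F v <= maxweight F u) /\
  (forall tau : R, 0 < tau ->
     self_bounding (fun (_ : E) (t : R) => 0 <= t <= tau)
                   (fun w => maxweight F w / tau)).
Proof.
split.
  move=> u v _ _; rewrite ler_norml lip1 andbT lerNl opprB.
  by apply: le_trans (lip1 _ _ _) _; under eq_bigr => e _ do rewrite distrC.
split.
  by move=> u v _ h; apply: mono.
move=> tau htau.
pose xi (x : E -> R) (i : E) := fun e => if e == i then 0 else x e.
exists (fun i x => maxweight F (xi x i) / tau); split.
  move=> i x y _ _ hxy; congr (_ / _); apply: eq_bigr => S _; apply: eq_bigr => e _.
  by rewrite /xi; case: eqP => // /eqP /hxy.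
move=> x hx.
have x0 : forall e, 0 <= x e by move=> e; case/andP: (hx e).
have [S0 S0F S0E] : {S0 | S0 \in F & maxweight F x = \sum_(e in S0) x e}.
  by apply: eq_bigmax hF0 _ => S _; apply: sumr_ge0.
have key : forall i, maxweight F x - maxweight F (xi x i) <=
    \sum_(e in S0) (if e == i then x e else 0).
  move=> i; apply: le_trans (lerB (lexx _) (mw_ge (xi x i) S0F)) _.
  rewrite S0E -sumrB; apply: ler_sum => e _.
  by rewrite /xi; case: eqP => _; rewrite ?subr0 ?subrr.
have xi0 : forall i e, xi x i e <= x e.
  by move=> i e; rewrite /xi; case: eqP.
split.
  move=> i; rewrite -mulrBl; apply/andP; split.
    by apply: divr_ge0; [rewrite subr_ge0 mono | exact: ltW].
  rewrite ler_pdivrMr // mul1r; apply: le_trans (key i) _.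
  apply: le_trans (sub_sum _ _) _.
    by move=> e; case: eqP.
  by rewrite sum_pick; case/andP: (hx i).
under eq_bigr => j _ do rewrite -mulrBl.
rewrite -mulr_suml; apply: ler_wpM2r; first by rewrite invr_ge0 ltW.
apply: le_trans (ler_sum _ (fun i _ => key i)) _.
rewrite exchange_big /= S0E /=; apply: ler_sum => e _.
under eq_bigr => j _ do rewrite (eq_sym e j).
by rewrite sum_pick.
Qed.
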